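(* Let $\vartheta_1,\ldots,\vartheta_t$ be real numbers, $d$ a positive integer, $\tau_1,\tau_2$ positive real numbers, and $\sigma$ a non-decreasing positive function on the positive integers with $\lim_{n\to\infty}\sigma(n)=\infty$. Assume there is a sequence $(P_n)_{n\ge0}$ of polynomials in $\mathbb{Z}[X_1,\ldots,X_t]$, with $P_n$ of total degree at most $d$ and length at most $e^{\sigma(n)}$, such that $$e^{-(\tau_1+o(1))\sigma(n)}\le|P_n(\vartheta_1,\ldots,\vartheta_t)|\le e^{-(\tau_2+o(1))\sigma(n+1)}$$ as $n\to\infty$. Then $$\tau_2\le\left(\binom{d+t}{t}-1\right)(1+\tau_1-\tau_2).$$
   Context: The length of a polynomial with integer coefficients is the sum of the absolute values of its coefficients. $o(1)$ denotes quantities tending to $0$ as $n\to\infty$. *)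

(* Defs.v *)
From Stdlib Require Import Reals Lra ZArith List.
Import ListNotations.
Open Scope R_scope.

(* Exponent vectors of monomials in t variables of total degree <= d:
   lists of length t of naturals with sum <= d. *)
Fixpoint monos (t d : nat) : list (list nat) :=
  match t with
  | O => [nil]
  | S t' => flat_map (fun k => map (cons k) (monos t' (d - k))) (seq 0 (S d))
  end.

Fixpoint monom (theta : nat -> R) (i : nat) (a : list nat) : R :=
  match a with
  | nil => 1
  | k :: r => theta i ^ k * monom theta (S i) r
  end.

(* A polynomial in Z[X_0,...,X_{t-1}] of total degree <= d is given by its
   integer coefficients c alpha for alpha in monos t d. *)
Definition poly_eval (t d : nat) (c : list nat -> Z) (theta : nat -> R) : R :=
  fold_right (fun a acc => IZR (c a) * monom theta 0 a + acc) 0 (monos t d).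

Definition poly_length (t d : nat) (c : list nat -> Z) : R :=
  fold_right (fun a acc => Rabs (IZR (c a)) + acc) 0 (monos t d).

Definition tends_to_zero (e : nat -> R) : Prop := Un_cv e 0.

(* Main.v *)
Require Import Defs.
From Stdlib Require Import Reals Lra Lia List ZArith Classical.
Import ListNotations.
Open Scope R_scope.

Lemma exp_le_mono x y : x <= y -> exp x <= exp y.
Proof. intros [H|H]. left; apply exp_increasing; auto. subst; lra. Qed.

Lemma exp_le_inv' x y : exp x <= exp y -> x <= y.
Proof. intros H. destruct (Rle_lt_dec x y); auto. apply exp_increasing in r. lra. Qed.

Lemma exp_pow x n : exp x ^ n = exp (INR n * x).
Proof.
  induction n. simpl. rewrite Rmult_0_l, exp_0; auto.
  rewrite S_INR. simpl. rewrite IHn. rewrite <- exp_plus. f_equal. ring.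
Qed.

Lemma two_le_e : 2 <= exp 1.
Proof. pose proof (exp_ineq1_le 1). lra. Qed.

Definition frac (x : R) : R := x - IZR (Zfloor x).

Lemma frac_bounds x : 0 <= frac x < 1.
Proof. unfold frac. pose proof (Zfloor_bound x). lra. Qed.

Fixpoint boxes (L Q : nat) : list (list nat) :=
  match L with
  | O => [nil]
  | S L' => flat_map (fun k => map (cons k) (boxes L' Q)) (seq 0 Q)
  end.

Lemma boxes_length L Q : length (boxes L Q) = (Q ^ L)%nat.
Proof.
  induction L; simpl; auto.
  rewrite (flat_map_constant_length (c := Q ^ L)%nat).
  - rewrite length_seq. lia.
  - intros. rewrite length_map. auto.
Qed.

Lemma in_boxes L Q b : length b = L -> (forall x, In x b -> (x < Q)%nat) -> In b (boxes L Q).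
Proof.
  revert b; induction L; intros b Hl Hb.
  - destruct b; simpl in *; try lia. auto.
  - destruct b as [|x b]; simpl in *; try lia.
    apply in_flat_map. exists x. split.
    + apply in_seq. specialize (Hb x (or_introl eq_refl)). lia.
    + apply in_map. apply IHL; auto.
Qed.

Definition box (Q : nat) (l : list R) (j : nat) : list nat :=
  map (fun y => Z.to_nat (Zfloor (INR Q * frac (INR j * y)))) l.

Lemma abs_lt_inv Q x : 0 < Q -> -1 < Q * x < 1 -> Rabs x < / Q.
Proof.
  intros HQ [H1 H2].
  assert (HQi : 0 < / Q) by (apply Rinv_0_lt_compat; auto).
  assert (Hx : x = / Q * (Q * x)) by (field; lra).
  apply Rabs_def1; rewrite Hx; nra.
Qed.

Lemma dirichlet (l : list R) (Q : nat) : (1 <= Q)%nat ->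
  exists q1 q2 : nat, (q1 < q2 <= Q ^ length l)%nat /\
    forall y, In y l ->
      Rabs (INR (q2 - q1) * y - IZR (Zfloor (INR q2 * y) - Zfloor (INR q1 * y))) < / INR Q.
Proof.
  intros HQ.
  assert (HQr : 0 < INR Q) by (apply lt_0_INR; lia).
  set (J := seq 0 (S (Q ^ length l))).
  set (f := box Q l).
  assert (Hfl : forall j y, In y l -> (0 <= Zfloor (INR Q * frac (INR j * y)) < Z.of_nat Q)%Z).
  { intros j y _. pose proof (frac_bounds (INR j * y)).
    split.
    - apply Zfloor_lub. simpl. nra.
    - apply lt_IZR. rewrite <- INR_IZR_INZ.
      pose proof (Zfloor_bound (INR Q * frac (INR j * y))). nra. }
  assert (HnoND : ~ NoDup (map f J)).
  { intros HND. assert (Hinc : incl (map f J) (boxes (length l) Q)).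
    { intros b Hb. apply in_map_iff in Hb. destruct Hb as [j [<- _]].
      apply in_boxes. unfold f, box. rewrite length_map; auto.
      intros x Hx. unfold f, box in Hx. apply in_map_iff in Hx.
      destruct Hx as [y [<- Hy]]. specialize (Hfl j y Hy). lia. }
    pose proof (NoDup_incl_length HND Hinc).
    rewrite length_map, boxes_length in H. unfold J in H. rewrite length_seq in H. lia. }
  assert (Hpair : exists i j, In i J /\ In j J /\ i <> j /\ f i = f j).
  { apply NNPP. intros Hn. apply HnoND. apply NoDup_map_NoDup_ForallPairs.
    - intros x y Hx Hy Hf. destruct (Nat.eq_dec x y); auto. exfalso; apply Hn; eauto 10.
    - apply seq_NoDup. }
  assert (Hpair2 : exists i j, In i J /\ In j J /\ (i < j)%nat /\ f i = f j).
  { destruct Hpair as [i [j [Hi [Hj [Hij Hf]]]]].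
    destruct (Nat.lt_gt_cases i j) as [[H|H] _]; auto.
    - exists i, j; auto.
    - exists j, i; auto. }
  destruct Hpair2 as [i [j [Hi [Hj [Hij Hf]]]]].
  exists i, j. unfold J in *. apply in_seq in Hj. split; [lia|].
  intros y Hy.
  pose proof (ext_in_map Hf y Hy) as E. simpl in E.
  pose proof (Hfl i y Hy) as Bi. pose proof (Hfl j y Hy) as Bj.
  assert (Ez : Zfloor (INR Q * frac (INR i * y)) = Zfloor (INR Q * frac (INR j * y))) by lia.
  pose proof (Zfloor_bound (INR Q * frac (INR i * y))) as Fi.
  pose proof (Zfloor_bound (INR Q * frac (INR j * y))) as Fj.
  rewrite Ez in Fi.
  apply abs_lt_inv; auto.
  rewrite minus_INR by lia. rewrite minus_IZR.
  unfold frac in Fi, Fj. split; nra.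
Qed.

Lemma monos_head t d : exists rest, monos t d = repeat 0%nat t :: rest.
Proof.
  revert d; induction t; intros d.
  - exists nil. reflexivity.
  - simpl. rewrite Nat.sub_0_r. destruct (IHt d) as [r Hr]. rewrite Hr.
    simpl. eexists; reflexivity.
Qed.

Lemma monom_zero theta t i : monom theta i (repeat 0%nat t) = 1.
Proof. revert i; induction t; intros i; simpl; auto. rewrite IHt. ring. Qed.

Definition evalL theta (c : list nat -> Z) (l : list (list nat)) : R :=
  fold_right (fun a acc => IZR (c a) * monom theta 0 a + acc) 0 l.
Definition lenL (c : list nat -> Z) (l : list (list nat)) : R :=
  fold_right (fun a acc => Rabs (IZR (c a)) + acc) 0 l.
Definition XL (c p : list nat -> Z) (l : list (list nat)) : Z :=
  fold_right (fun a acc => (c a * p a + acc)%Z) 0%Z l.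

Lemma key_bound theta c p q e l : 0 <= e ->
  (forall a, In a l -> Rabs (q * monom theta 0 a - IZR (p a)) <= e) ->
  Rabs (IZR (XL c p l) - q * evalL theta c l) <= lenL c l * e.
Proof.
  intros He; induction l as [|a l IH]; intros Hb; simpl.
  - replace (0 - q * 0) with 0 by ring. rewrite Rabs_R0. lra.
  - rewrite plus_IZR, mult_IZR.
    replace (IZR (c a) * IZR (p a) + IZR (XL c p l) - q * (IZR (c a) * monom theta 0 a + evalL theta c l))
      with (- (IZR (c a) * (q * monom theta 0 a - IZR (p a))) + (IZR (XL c p l) - q * evalL theta c l)) by ring.
    eapply Rle_trans; [apply Rabs_triang|].
    rewrite Rabs_Ropp, Rabs_mult.
    specialize (IH (fun a' H => Hb a' (or_intror H))).
    specialize (Hb a (or_introl eq_refl)).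
    pose proof (Rabs_pos (IZR (c a))).
    assert (Rabs (IZR (c a)) * Rabs (q * monom theta 0 a - IZR (p a)) <= Rabs (IZR (c a)) * e)
      by (apply Rmult_le_compat_l; auto).
    lra.
Qed.

Lemma lenL_nonneg c l : 0 <= lenL c l.
Proof. induction l; simpl. lra. pose proof (Rabs_pos (IZR (c a))). lra. Qed.

Lemma poly_dirichlet t d theta (P : nat -> list nat -> Z) rest :
  monos t d = repeat 0%nat t :: rest ->
  forall Q : nat, (1 <= Q)%nat -> exists q : nat, (1 <= q <= Q ^ length rest)%nat /\
    exists X : nat -> Z, forall n,
      Rabs (IZR (X n) - INR q * poly_eval t d (P n) theta) <= poly_length t d (P n) / INR Q.
Proof.
  intros Hm Q HQ.
  destruct (dirichlet (map (monom theta 0) rest) Q HQ) as [q1 [q2 [Hq Hy]]].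
  rewrite length_map in Hq.
  exists (q2 - q1)%nat. split; [lia|].
  set (p := fun a => (Zfloor (INR q2 * monom theta 0 a) - Zfloor (INR q1 * monom theta 0 a))%Z).
  exists (fun n => (P n (repeat 0%nat t) * Z.of_nat (q2 - q1) + XL (P n) p rest)%Z).
  intros n. unfold poly_eval, poly_length. rewrite Hm. simpl.
  rewrite monom_zero. fold (evalL theta (P n) rest). fold (lenL (P n) rest).
  rewrite plus_IZR, mult_IZR, <- INR_IZR_INZ.
  replace (IZR (P n (repeat 0%nat t)) * INR (q2 - q1) + IZR (XL (P n) p rest) -
     INR (q2 - q1) * (IZR (P n (repeat 0%nat t)) * 1 + evalL theta (P n) rest))
    with (IZR (XL (P n) p rest) - INR (q2 - q1) * evalL theta (P n) rest) by ring.
  assert (HQr : 0 < INR Q) by (apply lt_0_INR; lia).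
  eapply Rle_trans.
  - apply (key_bound theta (P n) p (INR (q2 - q1)) (/ INR Q)).
    + left; apply Rinv_0_lt_compat; auto.
    + intros a Ha. left. apply Hy. apply in_map; auto.
  - unfold Rdiv. apply Rmult_le_compat_r. left; apply Rinv_0_lt_compat; auto.
    pose proof (Rabs_pos (IZR (P n (repeat 0%nat t)))). lra.
Qed.

Lemma len_monos_rec t d :
  length (monos (S t) (S d)) = (length (monos t (S d)) + length (monos (S t) d))%nat.
Proof.
  assert (G : forall (h : nat -> list (list nat)) s,
    length (flat_map (fun k => map (cons k) (h k)) s) = fold_right (fun k acc => length (h k) + acc)%nat 0%nat s).
  { intros h s. induction s; simpl; auto. rewrite length_app, length_map. lia. }
  assert (Sh : forall (F : nat -> nat) n a,
    fold_right (fun k acc => F k + acc)%nat 0%nat (seq (S a) n) =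
    fold_right (fun k acc => F (S k) + acc)%nat 0%nat (seq a n)).
  { intros F n. induction n; intros a; simpl; auto. }
  cbn [monos]. rewrite !G.
  change (seq 0 (S (S d))) with (0%nat :: seq 1 (S d)).
  cbn [fold_right]. rewrite Sh. rewrite Nat.sub_0_r. reflexivity.
Qed.

Lemma len_monos_0 t : length (monos t 0) = 1%nat.
Proof.
  induction t; simpl; auto. rewrite length_app, length_map. simpl. lia.
Qed.

Lemma len_monos t d : INR (length (monos t d)) = C (d + t) t.
Proof.
  revert d. induction t; intros d.
  - simpl. unfold C. rewrite Nat.add_0_r, Nat.sub_0_r. simpl.
    pose proof (INR_fact_neq_0 d). field; auto.
  - induction d.
    + rewrite len_monos_0. simpl (0 + S t)%nat. unfold C. rewrite Nat.sub_diag.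
      replace (fact 0) with 1%nat by reflexivity. rewrite Rmult_1_r. unfold Rdiv. rewrite Rinv_r by apply INR_fact_neq_0. reflexivity.
    + rewrite len_monos_rec, plus_INR, IHt, IHd.
      replace (S d + S t)%nat with (S (S d + t)) by lia.
      replace (d + S t)%nat with (S d + t)%nat by lia.
      apply pascal. lia.
Qed.

Lemma transition (P : nat -> Prop) n0 k : ~ P n0 -> P (n0 + k)%nat ->
  exists m, (n0 <= m < n0 + k)%nat /\ ~ P m /\ P (S m).
Proof.
  intros H0. induction k; intros Hk.
  - rewrite Nat.add_0_r in Hk. contradiction.
  - destruct (classic (P (n0 + k)%nat)) as [Hp|Hp].
    + destruct (IHk Hp) as [m [? ?]]. exists m. split; [lia|auto].
    + exists (n0 + k)%nat. split; [lia|]. split; auto. rewrite <- Nat.add_succ_r. auto.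
Qed.

Section Core.
Variables (N : nat) (tau1 tau2 : R) (sigma L H : nat -> R).
Hypothesis Htau2 : 0 < tau2.
Hypothesis Htau1 : 0 < tau1.
Hypothesis Hpos : forall n, (1<=n)%nat -> 0 < sigma n.
Hypothesis Hmono : forall n m, (1<=n)%nat -> (n<=m)%nat -> sigma n <= sigma m.
Hypothesis Hinf : cv_infty sigma.
Hypothesis HH : forall n, (1<=n)%nat -> H n <= exp (sigma n).
Hypothesis Hclean : forall eta, 0 < eta -> exists n1, (1 <= n1)%nat /\ forall n, (n1 <= n)%nat ->
   exp (-((tau1+eta)*sigma n)) <= Rabs (L n) /\ Rabs (L n) <= exp (-((tau2 - eta) * sigma (S n))).
Hypothesis HD : forall Q : nat, (1 <= Q)%nat -> exists q : nat, (1 <= q <= Q ^ N)%nat /\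
   exists X : nat -> Z, forall n, Rabs (IZR (X n) - INR q * L n) <= H n / INR Q.

Lemma tau_order : tau2 <= tau1.
Proof.
  destruct (Rle_lt_dec tau2 tau1) as [h|h]; auto. exfalso.
  set (eta := (tau2 - tau1) / 3).
  destruct (Hclean eta) as [n1 [Hn1 Hc]]. unfold eta; lra.
  destruct (Hc n1 (le_n _)) as [h1 h2].
  pose proof (exp_le_inv' _ _ (Rle_trans _ _ _ h1 h2)) as h3.
  pose proof (Hpos n1 Hn1). pose proof (Hmono n1 (S n1) Hn1 (Nat.le_succ_diag_r _)).
  assert (Heta : tau2 - eta > tau1 + eta) by (unfold eta; lra).
  assert ((tau2 - eta) * sigma n1 <= (tau2 - eta) * sigma (S n1)) by (apply Rmult_le_compat_l; unfold eta; lra).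
  assert ((tau1 + eta) * sigma n1 < (tau2 - eta) * sigma n1) by (apply Rmult_lt_compat_r; lra).
  lra.
Qed.

Theorem core : tau2 <= INR N * (1 + tau1 - tau2).
Proof.
  pose proof tau_order as T12.
  pose proof (pos_INR N) as HN0.
  destruct (Rle_lt_dec tau2 (INR N * (1 + tau1 - tau2))) as [h|h]; auto. exfalso.
  set (D := tau2 - INR N * (1 + tau1 - tau2)).
  assert (HD0 : 0 < D) by (unfold D; lra).
  set (eta := D / (2 * (1 + 2 * INR N))).
  assert (Heta : 0 < eta) by (unfold eta; apply Rdiv_lt_0_compat; lra).
  assert (Heta2 : eta * (1 + 2 * INR N) = D / 2) by (unfold eta; field; lra).
  set (a := 1 + tau1 + eta). set (b := tau2 - eta).
  set (gam := D / 2).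
  assert (Hg1 : gam <= b - INR N).
  { unfold gam, b. assert (INR N <= INR N * (1 + tau1 - tau2)) by nra.
    assert (eta <= eta * (1 + 2 * INR N)) by nra.
    assert (tau2 - INR N >= D) by (unfold D; lra). lra. }
  assert (Hg2 : gam = b - INR N * (a - b)).
  { unfold gam, a, b. replace (D / 2) with (D - eta * (1 + 2 * INR N)) by lra. unfold D. ring. }
  assert (Hgam : 0 < gam) by (unfold gam; lra).
  set (c := 1 + Rabs (a - b)).
  set (S0 := (INR N + 1) / gam).
  assert (HS0 : 0 < S0) by (unfold S0; apply Rdiv_lt_0_compat; lra).
  destruct (Hclean eta Heta) as [n1 [Hn1 Hc]].
  assert (Ha1 : 1 <= a) by (unfold a; lra).
  destruct (INR_archimed 1 (2 * exp (a * sigma n1) + 2 * exp (c * S0) + 2)) as [Q HQ]; [lra|].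
  rewrite Rmult_1_r in HQ.
  pose proof (exp_pos (a * sigma n1)). pose proof (exp_pos (c * S0)).
  assert (HQ1 : (1 <= Q)%nat).
  { destruct Q. simpl in HQ. lra. lia. }
  assert (HQr : 0 < INR Q) by lra.
  destruct (HD Q HQ1) as [q [Hq [X HX]]].
  assert (Hqr : 1 <= INR q) by (apply (le_INR 1); lia).
  assert (HqQ : INR q <= INR Q ^ N) by (rewrite <- pow_INR; apply le_INR; lia).
  assert (F1 : forall n, (n1 <= n)%nat -> 2 * exp (sigma n) < INR Q -> X n <> 0%Z ->
            exp (b * sigma (S n)) < 2 * INR q).
  { intros n Hn Hadm HX0.
    assert (Hz : 1 <= Rabs (IZR (X n))).
    { rewrite Rabs_Zabs. apply IZR_le. lia. }
    pose proof (HX n) as Hb.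
    assert (HHn : H n / INR Q < / 2).
    { assert (H n < INR Q / 2) by (pose proof (HH n ltac:(lia)); lra).
      apply (Rmult_lt_reg_r (INR Q)); auto. unfold Rdiv. rewrite Rmult_assoc, Rinv_l by lra. lra. }
    assert (Hql : / 2 < INR q * Rabs (L n)).
    { rewrite <- (Rabs_pos_eq (INR q)) by lra. rewrite <- Rabs_mult.
      pose proof (Rabs_triang_inv (IZR (X n)) (IZR (X n) - INR q * L n)).
      replace (IZR (X n) - (IZR (X n) - INR q * L n)) with (INR q * L n) in H2 by ring. lra. }
    destruct (Hc n Hn) as [_ Hu].
    assert (/ 2 < INR q * exp (- (b * sigma (S n)))).
    { unfold b. eapply Rlt_le_trans; eauto. apply Rmult_le_compat_l; lra. }
    replace (exp (b * sigma (S n))) with (/ exp (- (b * sigma (S n)))).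
    2:{ rewrite exp_Ropp, Rinv_inv; auto. }
    pose proof (exp_pos (- (b * sigma (S n)))).
    apply (Rmult_lt_reg_r (exp (- (b * sigma (S n))))); auto.
    rewrite Rinv_l by lra. lra. }
  assert (F2 : forall n, (n1 <= n)%nat -> X n = 0%Z -> INR q * INR Q <= exp (a * sigma n)).
  { intros n Hn HX0. pose proof (HX n) as Hb. rewrite HX0 in Hb.
    replace (IZR 0 - INR q * L n) with (- (INR q * L n)) in Hb by (simpl; ring).
    rewrite Rabs_Ropp, Rabs_mult, (Rabs_pos_eq (INR q)) in Hb by lra.
    destruct (Hc n Hn) as [Hl _].
    pose proof (HH n ltac:(lia)).
    assert (INR q * Rabs (L n) * INR Q <= exp (sigma n)).
    { apply (Rmult_le_compat_r (INR Q)) in Hb; [|lra].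
      replace (H n / INR Q * INR Q) with (H n) in Hb by (field; lra). lra. }
    assert (INR q * exp (- ((tau1 + eta) * sigma n)) * INR Q <= exp (sigma n)).
    { eapply Rle_trans; [|eauto]. apply Rmult_le_compat_r; [lra|]. apply Rmult_le_compat_l; lra. }
    replace (exp (a * sigma n)) with (exp (sigma n) * exp ((tau1 + eta) * sigma n))
      by (rewrite <- exp_plus; f_equal; unfold a; ring).
    pose proof (exp_pos ((tau1 + eta) * sigma n)).
    replace (INR q * INR Q) with (INR q * exp (- ((tau1 + eta) * sigma n)) * INR Q * exp ((tau1 + eta) * sigma n)).
    2:{ rewrite exp_Ropp. field. lra. }
    apply Rmult_le_compat_r; lra. }
  assert (Hs1 : 0 < sigma n1) by (apply Hpos; auto).
  assert (HX1 : X n1 <> 0%Z).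
  { intros E. pose proof (F2 n1 (le_n _) E). nra. }
  destruct (Hinf (INR Q)) as [n0 Hn0].
  set (P := fun n => INR Q <= 2 * exp (sigma n)).
  assert (HP1 : ~ P n1).
  { unfold P. assert (exp (sigma n1) <= exp (a * sigma n1)) by (apply exp_le_mono; nra). lra. }
  assert (HP2 : P (n1 + n0)%nat).
  { unfold P. pose proof (Hn0 (n1 + n0)%nat ltac:(lia)). pose proof (exp_ineq1_le (sigma (n1 + n0)%nat)). lra. }
  destruct (transition P n1 n0 HP1 HP2) as [m0 [Hm0 [Hm0a Hm0b]]].
  unfold P in Hm0a, Hm0b.
  assert (Hadm : forall n, (n1 <= n <= m0)%nat -> 2 * exp (sigma n) < INR Q).
  { intros n Hn. assert (sigma n <= sigma m0) by (apply Hmono; lia).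
    assert (exp (sigma n) <= exp (sigma m0)) by (apply exp_le_mono; auto). lra. }
  assert (He : 2 <= exp 1) by apply two_le_e.
  destruct (Z.eq_dec (X m0) 0) as [Xm0|Xm0].
  -
    assert (HPX1 : ~ (fun n => X n = 0%Z) n1) by auto.
    assert (HPX2 : (fun n => X n = 0%Z) (n1 + (m0 - n1))%nat) by (simpl; replace (n1 + (m0 - n1))%nat with m0 by lia; auto).
    destruct (transition _ n1 (m0 - n1) HPX1 HPX2) as [m [Hm [Hma Hmb]]].
    set (s := S m). assert (Hss : 0 < sigma s) by (apply Hpos; unfold s; lia).
    pose proof (F1 m ltac:(lia) (Hadm m ltac:(lia)) Hma) as G1.
    pose proof (F2 s ltac:(unfold s; lia) Hmb) as G2.
    assert (G3 : INR Q < 2 * exp ((a - b) * sigma s)).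
    { replace (exp ((a - b) * sigma s)) with (exp (a * sigma s) * / exp (b * sigma s)).
      2:{ rewrite <- exp_Ropp, <- exp_plus. f_equal. ring. }
      pose proof (exp_pos (b * sigma s)).
      apply (Rmult_lt_reg_r (exp (b * sigma s))); auto.
      rewrite Rmult_assoc, Rmult_assoc, Rinv_l, Rmult_1_r by lra.
      fold s in G1. nra. }
    assert (G4 : INR Q <= exp (1 + (a - b) * sigma s)).
    { rewrite exp_plus. nra. }
    assert (G5 : INR q <= exp (INR N * (1 + (a - b) * sigma s))).
    { rewrite <- exp_pow. eapply Rle_trans; eauto. apply pow_incr. lra. }
    assert (G6 : exp (b * sigma s) < exp (1 + INR N * (1 + (a - b) * sigma s))).
    { rewrite exp_plus. fold s in G1. nra. }
    apply exp_lt_inv in G6.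
    assert (G7 : gam * sigma s < INR N + 1) by (rewrite Hg2; nra).
    assert (G8 : sigma s < S0).
    { unfold S0. apply (Rmult_lt_reg_l gam); auto. unfold Rdiv. field_simplify; lra. }
    assert (G9 : (a - b) * sigma s <= c * S0).
    { unfold c. pose proof (Rle_abs (a - b)). pose proof (Rabs_pos (a - b)). nra. }
    apply exp_le_mono in G9. lra.
  -
    set (s := S m0). assert (Hss : 0 < sigma s) by (apply Hpos; unfold s; lia).
    pose proof (F1 m0 ltac:(lia) (Hadm m0 ltac:(lia)) Xm0) as G1.
    assert (G4 : INR Q <= exp (1 + sigma s)) by (rewrite exp_plus; fold s in Hm0b; nra).
    assert (G5 : INR q <= exp (INR N * (1 + sigma s))).
    { rewrite <- exp_pow. eapply Rle_trans; eauto. apply pow_incr. lra. }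
    assert (G6 : exp (b * sigma s) < exp (1 + INR N * (1 + sigma s))).
    { rewrite exp_plus. fold s in G1. nra. }
    apply exp_lt_inv in G6.
    assert (G7 : gam * sigma s < INR N + 1) by nra.
    assert (G8 : sigma s < S0).
    { unfold S0. apply (Rmult_lt_reg_l gam); auto. unfold Rdiv. field_simplify; lra. }
    assert (G9 : sigma s <= c * S0).
    { unfold c. pose proof (Rabs_pos (a - b)). nra. }
    apply exp_le_mono in G9. fold s in Hm0b. lra.
Qed.
End Core.

Theorem mainTheorem4
  (t : nat) (theta : nat -> R) (d : nat) (tau1 tau2 : R) (sigma : nat -> R)
  (P : nat -> list nat -> Z)
  (Hd : (1 <= d)%nat) (Htau1 : 0 < tau1) (Htau2 : 0 < tau2)
  (Hsig_pos : forall n, (1 <= n)%nat -> 0 < sigma n)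
  (Hsig_mono : forall n m, (1 <= n)%nat -> (n <= m)%nat -> sigma n <= sigma m)
  (Hsig_inf : cv_infty sigma)
  (Hlen : forall n, (1 <= n)%nat -> poly_length t d (P n) <= exp (sigma n))
  (Hbounds : exists eps1 eps2 : nat -> R,
      tends_to_zero eps1 /\ tends_to_zero eps2 /\
      exists N : nat, forall n, (N <= n)%nat ->
        exp (- ((tau1 + eps1 n) * sigma n)) <= Rabs (poly_eval t d (P n) theta) /\
        Rabs (poly_eval t d (P n) theta) <= exp (- ((tau2 + eps2 n) * sigma (S n)))) :
  tau2 <= (C (d + t) t - 1) * (1 + tau1 - tau2).
Proof.
  destruct (monos_head t d) as [rest Hm].
  assert (HC : C (d + t) t - 1 = INR (length rest)).
  { rewrite <- len_monos, Hm. simpl length. rewrite S_INR. ring. }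
  rewrite HC.
  apply (core (length rest) tau1 tau2 sigma (fun n => poly_eval t d (P n) theta)
           (fun n => poly_length t d (P n))); auto.
  - intros eta Heta.
    destruct Hbounds as [e1 [e2 [H1 [H2 [N0 HN0]]]]].
    destruct (H1 eta Heta) as [N1 HN1]. destruct (H2 eta Heta) as [N2 HN2].
    exists (Nat.max (Nat.max N1 N2) (Nat.max N0 1)). split; [lia|].
    intros n Hn.
    specialize (HN1 n ltac:(lia)). specialize (HN2 n ltac:(lia)).
    unfold R_dist in HN1, HN2. rewrite Rminus_0_r in HN1, HN2.
    apply Rabs_def2 in HN1. apply Rabs_def2 in HN2.
    destruct (HN0 n ltac:(lia)) as [Hl Hu].
    pose proof (Hsig_pos n ltac:(lia)). pose proof (Hsig_pos (S n) ltac:(lia)).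
    split.
    + eapply Rle_trans; [|exact Hl]. apply exp_le_mono. nra.
    + eapply Rle_trans; [exact Hu|]. apply exp_le_mono. nra.
  - apply poly_dirichlet; auto.
Qed.
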